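(* Let $(L^n_{\mathbb{R}})^{+}$ be the set of all real symmetric matrices $A\in M_n(\mathbb{R})$ with nonnegative spectrum such that the Schur map $S_A\colon M_n(\mathbb{R})\to M_n(\mathbb{R})$, $S_A(B)=A\circ B$, is nonzero and multiplicative. Then $(L^n_{\mathbb{R}})^{+}$ (a group under the Schur product) has cardinality $2^{n-1}$.
   Context: $A\circ B=(a_{ij}b_{ij})$ is the entrywise product; multiplicative means $S_A(BC)=S_A(B)S_A(C)$ for all $B,C\in M_n(\mathbb{R})$. *)

(* Defs.v *)
From HB Require Import structures.
From mathcomp Require Import all_boot all_order all_algebra.
From mathcomp Require Import reals.
Set Implicit Arguments. Unset Strict Implicit. Unset Printing Implicit Defensive.
Import Order.TTheory GRing.Theory Num.Theory.
Local Open Scope ring_scope.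

Definition schur (R : realType) (n : nat) (A B : 'M[R]_n) : 'M[R]_n :=
  \matrix_(i, j) (A i j * B i j).

Definition schur_nonzero (R : realType) (n : nat) (A : 'M[R]_n) : Prop :=
  exists B : 'M[R]_n, schur A B != 0.

Definition schur_multiplicative (R : realType) (n : nat) (A : 'M[R]_n) : Prop :=
  forall B C : 'M[R]_n, schur A (B *m C) = schur A B *m schur A C.

(* A real symmetric matrix has nonnegative spectrum: all its (real)
   eigenvalues are >= 0 (the spectrum of a real symmetric matrix is real). *)
Definition nonneg_spectrum (R : realType) (n : nat) (A : 'M[R]_n) : Prop :=
  forall a : R, eigenvalue A a -> 0 <= a.

Definition in_Lplus (R : realType) (n : nat) (A : 'M[R]_n) : Prop :=
  [/\ A^T = A, nonneg_spectrum A, schur_nonzero A & schur_multiplicative A].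

(* Main.v *)
Require Import Defs.
From HB Require Import structures.
From mathcomp Require Import all_boot all_order all_algebra.
From mathcomp Require Import reals.
From mathcomp Require Import ring lra.
Import GRing.Theory Num.Theory.
Local Open Scope ring_scope.

Section Aux.
Variable R : realType.
Variable m : nat.
Implicit Types f : {ffun 'I_m -> bool}.

Definition dv f (i : 'I_m.+1) : R :=
  if unlift ord0 i is Some k then (if f k then -1 else 1) else 1.
Definition Mf f : 'M[R]_m.+1 := \matrix_(i, j) (dv f i * dv f j).

Lemma dv_sq f i : dv f i * dv f i = 1.
Proof.
rewrite /dv; case: (unlift _ _) => [k|]; [case: (f k)|]; by rewrite ?mulrNN mulr1.
Qed.

Lemma Mf_in f : in_Lplus (Mf f).
Proof.
split.
- by apply/matrixP=> i j; rewrite !mxE mulrC.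
- move=> a /eigenvalueP [v Hv v0].
  set s := \sum_i v 0 i * dv f i.
  have Hj : forall j, s * dv f j = a * v 0 j.
    move=> j; transitivity ((v *m Mf f) 0 j); last by rewrite Hv mxE.
    rewrite mxE /s mulr_suml; apply: eq_bigr => i _; by rewrite mxE mulrA.
  have Hsum : s * (m.+1)%:R = a * s.
    transitivity (\sum_(j < m.+1) s * dv f j * dv f j).
      under eq_bigr do rewrite -mulrA dv_sq mulr1.
      by rewrite sumr_const card_ord mulr_natr.
    have -> : a * s = \sum_j a * (v 0 j * dv f j) by rewrite /s mulr_sumr.
    by apply: eq_bigr => j _; rewrite mulrA -Hj.
  case: (eqVneq s 0) => [s0|s0].
  + case: (eqVneq a 0) => [->//|a0]. exfalso; move/eqP: v0; apply.
    apply/matrixP => i j; rewrite (ord1 i) mxE.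
    have := Hj j; rewrite s0 mul0r => /esym/eqP; rewrite mulf_eq0 (negbTE a0) /=.
    by move=> /eqP.
  + have -> : a = (m.+1)%:R by apply: (mulIf s0); rewrite [RHS]mulrC Hsum.
    exact: ler0n.
- exists 1; apply/eqP => /matrixP /(_ ord0 ord0); rewrite !mxE /= dv_sq ?eqxx ?mulr1.
  by move=> /eqP; rewrite oner_eq0.
- move=> B C; apply/matrixP => i j; rewrite !mxE mulr_sumr; apply: eq_bigr => k _.
  rewrite !mxE. have h := dv_sq f k. rewrite -[LHS]mulr1 -h; ring.
Qed.

Lemma Lplus_Mf (A : 'M[R]_m.+1) : in_Lplus A -> exists f, A = Mf f.
Proof.
case=> sym _ [B nz] mult.
have sd : forall p q, schur A (delta_mx p q) = A p q *: delta_mx p q.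
  move=> p q; apply/matrixP => r c; rewrite !mxE.
  by case: andP => [[/eqP-> /eqP->]|_]; rewrite ?mulr0 ?mulr1.
have key : forall i j k, A i j = A i k * A k j.
  move=> i j k. have := mult (delta_mx i k) (delta_mx k j).
  rewrite mul_delta_mx !sd -scalemxAl -scalemxAr mul_delta_mx scalerA.
  by move=> /matrixP /(_ i j); rewrite !mxE !eqxx /= !mulr1.
have Ad : forall k, A k k = 1.
  move=> k. have h := key k k k.
  case: (eqVneq (A k k) 0) => [z|nz0]; last first.
    have : A k k * (A k k - 1) = 0 by rewrite mulrBr mulr1 -h subrr.
    by move/eqP; rewrite mulf_eq0 (negbTE nz0) subr_eq0 => /eqP.
  have A0 : forall i j, A i j = 0.
    by move=> i j; rewrite (key i j k) (key i k k) z mulr0 mul0r.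
  exfalso; move/eqP: nz; apply; apply/matrixP=> i j; by rewrite !mxE A0 mul0r.
have symE : forall i j, A i j = A j i.
  by move=> i j; rewrite -[in LHS]sym mxE.
have Asq : forall i, A i ord0 * A i ord0 = 1.
  by move=> i; rewrite [X in _ * X]symE -key Ad.
exists [ffun k => A (lift ord0 k) ord0 == -1].
have dvE : forall i, dv [ffun k => A (lift ord0 k) ord0 == -1] i = A i ord0.
  move=> i; rewrite /dv; case: unliftP => [k ->|->]; last by rewrite Ad.
  rewrite ffunE.
  have sq : A (lift ord0 k) ord0 ^+ 2 == 1 by rewrite expr2 Asq.
  case: ifP => [/eqP->//|hn]; move: sq; rewrite sqrf_eq1 hn orbF.
  by move=> /eqP->.
by apply/matrixP => i j; rewrite mxE !dvE (key i j ord0) [A ord0 j]symE.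
Qed.

End Aux.

Theorem theorem3p4 (R : realType) (n : nat) (hn : (0 < n)%N) :
  exists s : seq 'M[R]_n,
    [/\ uniq s, (forall A : 'M[R]_n, A \in s <-> in_Lplus A)
      & size s = (2 ^ n.-1)%N].
Proof.
case: n hn => // m _.
exists (map (@Mf R m) (enum {ffun 'I_m -> bool})); split.
- rewrite map_inj_uniq ?enum_uniq //.
  move=> f g /matrixP H; apply/ffunP => k.
  have := H ord0 (lift ord0 k); rewrite !mxE /dv unlift_none liftK !mul1r.
  have n11 : (-1 : R) != 1 by apply/eqP => h; lra.
  case: (f k); case: (g k) => //= /eqP; by rewrite ?(negbTE n11) // eq_sym (negbTE n11).
- move=> A; split.
  + by move/mapP => [f _ ->]; exact: Mf_in.
  + by move/Lplus_Mf => [f ->]; apply/mapP; exists f => //; rewrite mem_enum.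
- by rewrite size_map -cardE card_ffun card_bool card_ord.
Qed.
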